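(* Let $(\mathbf{D},\mathbf{E})$ be a semi-dual pair and let $\mathbf{K}$ be a compact topological structure admitting a continuous embedding into some power of $\mathbf{D}$. Then: (a) every homomorphism from $\mathbf{K}^*$ into $\mathbf{E}$ is continuous; (b) $\mathbf{K}$ is reflexive with respect to $(\mathbf{D},\mathbf{E})$.
   Context: A structure is a set with constants, relations and (possibly partial) operations of a first-order language; homomorphisms preserve them; an embedding is an injective homomorphism $f$ with $R(f(x_0),\dots,f(x_{n-1}))\iff R(x_0,\dots,x_{n-1})$ for every relation $R$. For a finite structure $\mathbf{D}$, a structure is $\mathbf{D}$-separated if it embeds into some power of $\mathbf{D}$. A topological structure is a structure with a Hausdorff topology in which all relations and operations are continuous; finite structures carry the discrete topology and powers the product topology. For topological structures, $\hom(\mathbf{X},\mathbf{Y})$ denotes the set of continuous homomorphisms. Semi-dual pair: let $\mathcal L,\mathcal R$ be countable first-order languages, $\mathbf{D}$ a finite $\mathcal L$-model and $\mathbf{E}$ a finite $\mathcal R$-model with the same universe. $(\mathbf{D},\mathbf{E})$ is a semi-dual pair if for every finite $\mathbf{D}$-separated $\mathbf{X}$ with universe $X$: (S1) $\hom(\mathbf{X},\mathbf{D})$ is a substructure of $\mathbf{E}^X$; (S2) for every homomorphism $\phi$ from $\hom(\mathbf{X},\mathbf{D})$ (with the $\mathcal R$-structure induced from $\mathbf{E}^X$) into $\mathbf{E}$ there is $x\in X$ with $\phi(f)=f(x)$ for all $f\in\hom(\mathbf{X},\mathbf{D})$. For a topological structure $\mathbf{X}$ continuously embeddable into a power of $\mathbf{D}$,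 $\mathbf{X}^*$ is $\hom(\mathbf{X},\mathbf{D})$ with the $\mathcal R$-structure and product (pointwise) topology induced from $\mathbf{E}^{X}$ ($\mathbf{E}$ discrete), and $\mathbf{X}^{**}=\hom(\mathbf{X}^*,\mathbf{E})$ (continuous homomorphisms), viewed inside $\mathbf{D}^{\mathbf{X}^*}$. The evaluation map $e:\mathbf{X}\to\mathbf{X}^{**}$ is $e(x)(f)=f(x)$; $\mathbf{X}$ is reflexive with respect to $(\mathbf{D},\mathbf{E})$ if $e$ is onto. *)

(* Defs.v *)
From HB Require Import structures.
From mathcomp Require Import all_boot all_order all_algebra.
From mathcomp Require Import all_classical all_reals.
From mathcomp Require Import topology_structure separation_axioms compact
  function_spaces discrete_topology subspace_topology.
From Stdlib Require Import ClassicalEpsilon.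

Set Implicit Arguments.
Unset Strict Implicit.
Unset Printing Implicit Defensive.

Local Open Scope classical_set_scope.

Record language := Language {
  cst : countType;
  rel : countType;
  rar : rel -> nat;
  opr : countType;
  oar : opr -> nat }.

Record structure (L : language) (A : Type) := Structure {
  cval : cst L -> A;
  rval : forall r : rel L, ('I_(rar r) -> A) -> Prop;
  oval : forall o : opr L, ('I_(oar o) -> A) -> option A }.

Arguments cval {L A}.
Arguments rval {L A}.
Arguments oval {L A}.

Section Homs.
Variables (L : language) (A B : Type) (M : structure L A) (N : structure L B).

Definition is_hom (f : A -> B) : Prop :=
  [/\ forall c, f (cval M c) = cval N c,
      forall r (x : 'I_(rar r) -> A), rval M r x -> rval N r (f \o x)
    & forall o (x : 'I_(oar o) -> A) y,
        oval M o x = Some y -> oval N o (f \o x) = Some (f y)].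

Definition is_embedding (f : A -> B) : Prop :=
  [/\ is_hom f, injective f &
      forall r (x : 'I_(rar r) -> A), rval N r (f \o x) -> rval M r x].

End Homs.

(** Powers [M^I] (pointwise structure).  A partial operation is defined
    at a tuple iff it is defined in every coordinate. *)
Definition power_oval (L : language) (A I : Type) (M : structure L A)
  (o : opr L) (x : 'I_(oar o) -> (I -> A)) : option (I -> A) :=
  match excluded_middle_informative
          (forall i, isSome (oval M o (fun k => x k i))) with
  | left H => Some (fun i =>
      match oval M o (fun k => x k i) as u return isSome u -> A with
      | Some v => fun _ => v
      | None => fun F => False_rect A (notF F)
      end (H i))
  | right _ => None
  end.

Definition power (L : language) (A : Type) (M : structure L A) (I : Type)
  : structure L (I -> A) :=
  {| cval := fun c _ => cval M c;
     rval := fun r x => forall i, rval M r (fun k => x k i);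
     oval := fun o x => power_oval M x |}.

Definition is_substructure (L : language) (A : Type) (M : structure L A)
  (S : set A) : Prop :=
  (forall c, S (cval M c)) /\
  (forall o (x : 'I_(oar o) -> A) y,
      (forall k, S (x k)) -> oval M o x = Some y -> S y).

(** [phi] (restricted to [S]) is a homomorphism from the structure
    induced by [M] on [S] into [N].  (In the induced structure the
    relations are restricted, and an operation is defined at a tuple of
    [S] iff it is defined in [M] with value in [S].) *)
Definition is_hom_from_sub (L : language) (A B : Type) (M : structure L A)
  (S : set A) (N : structure L B) (phi : A -> B) : Prop :=
  [/\ forall c, S (cval M c) -> phi (cval M c) = cval N c,
      forall r (x : 'I_(rar r) -> A), (forall k, S (x k)) ->
        rval M r x -> rval N r (phi \o x)
    & forall o (x : 'I_(oar o) -> A) y, (forall k, S (x k)) -> S y ->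
        oval M o x = Some y -> oval N o (phi \o x) = Some (phi y)].

Definition homset (L : language) (A B : Type) (M : structure L A)
  (N : structure L B) : set (A -> B) := [set f | is_hom M N f].

Definition separated (L : language) (A U : Type) (D : structure L U)
  (M : structure L A) : Prop :=
  exists (I : Type) (e : A -> (I -> U)), is_embedding M (power D I) e.

Definition semi_dual_pair (L R : language) (U : finType)
  (D : structure L U) (E : structure R U) : Prop :=
  forall (X : finType) (MX : structure L X), separated D MX ->
    is_substructure (power E X) (homset MX D) /\
    (forall phi : (X -> U) -> U,
        is_hom_from_sub (power E X) (homset MX D) E phi ->
        exists x : X, forall f, homset MX D f -> phi f = f x).

Definition topological_structure (L : language) (T : topologicalType)
  (M : structure L T) : Prop :=
  [/\ hausdorff_space T,
      forall r, closed ([set x | rval M r x] : set {ptws 'I_(rar r) -> T})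
    & forall o (y0 : T),
        {within ([set x | oval M o x <> None] : set {ptws 'I_(oar o) -> T}),
          continuous (fun x : {ptws 'I_(oar o) -> T} =>
                         odflt y0 (oval M o x))}].

Notation discr U := (discrete_topology U).

Definition chom (L : language) (T : topologicalType) (U : finType)
  (M : structure L T) (D : structure L U) : set (T -> U) :=
  [set f | is_hom M D f /\ continuous (f : T -> discr U)].

Definition cont_embeddable (L : language) (T : topologicalType) (U : finType)
  (M : structure L T) (D : structure L U) : Prop :=
  exists (I : Type) (e : T -> (I -> U)),
    is_embedding M (power D I) e /\
    continuous (e : T -> {ptws I -> discr U}).

(* Main.v *)
Require Import Defs.
From mathcomp Require Import all_boot all_order all_algebra.
From mathcomp Require Import all_classical all_reals.
From mathcomp Require Import topology_structure separation_axioms compact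
  function_spaces discrete_topology subspace_topology.
From Stdlib Require Import ClassicalEpsilon.

Local Open Scope classical_set_scope.

Lemma power_ovalP (L : language) (A I : Type) (M : structure L A) o
  (x : 'I_(oar o) -> I -> A) (y : I -> A) :
  power_oval M x = Some y <-> forall i, oval M o (fun k => x k i) = Some (y i).
Proof.
rewrite /power_oval; case: excluded_middle_informative => H.
- split.
  + move=> [<-] i; move: (H i).
    by case: (oval M o (fun k => x k i)).
  + move=> Hy; congr Some; apply: funext => i; move: (H i) (Hy i).
    by case: (oval M o (fun k => x k i)) => // v _ [->].
- split => // Hy; exfalso; apply: H => i; by rewrite Hy.
Qed.

Definition ord0_elim (A : Type) (i : 'I_0) : A.
Proof. by case: i. Defined.

Lemma nth_In' (A : Type) (d : A) (s : seq A) i :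
  i < size s -> List.In (nth d s i) s.
Proof.
elim: s i => [|a s IH] [|i] //= H; first by left.
by right; apply: IH.
Qed.

Lemma In_nth' (A : Type) (d : A) (s : seq A) f :
  List.In f s -> exists2 i, i < size s & nth d s i = f.
Proof.
elim: s => [|a s IH] //= [->|/IH [i Hi <-]]; first by exists 0.
by exists i.+1.
Qed.

Section Witness.
Variables (L R : language) (U : finType) (D : structure L U)
  (E : structure R U) (T : topologicalType) (K : structure L T).
Hypothesis sd : semi_dual_pair D E.
Variable phi : (T -> U) -> U.
Hypothesis hphi : is_hom_from_sub (power E T) (chom K D) E phi.
Variables (n : nat) (F : 'I_n -> T -> U).
Hypothesis hF : forall i, chom K D (F i).

Let ev t : {ffun 'I_n -> U} := [ffun i => F i t].
Let inX (v : {ffun 'I_n -> U}) : bool := `[< exists t, ev t = v >].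
Let X := {v : {ffun 'I_n -> U} | inX v}.
Let proj t : X := exist _ (ev t) (asboolT (ex_intro _ t erefl)).

Let MX : structure L X := {| cval := fun c => proj (cval K c);
  rval := fun r x => rval (power D 'I_n) r
                        (fun k => (val (x k) : 'I_n -> U));
  oval := fun o x => [pick y : X | `[< oval (power D 'I_n) o
       (fun k => (val (x k) : 'I_n -> U)) = Some (val y : 'I_n -> U) >] ] |}.

Let ev_op {o} {x : 'I_(oar o) -> T} {y} : oval K o x = Some y ->
  oval (power D 'I_n) o (fun k => (ev (x k) : 'I_n -> U))
    = Some (ev y : 'I_n -> U).
Proof.
move=> Hx; apply/power_ovalP => i.
have -> : (fun k => ev (x k) i) = F i \o x by apply: funext => k; rewrite ffunE.
have [[_ _ h3] _] := hF i; rewrite ffunE; exact: h3.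
Qed.

Let proj_op {o} {x : 'I_(oar o) -> T} {y} : oval K o x = Some y ->
  oval MX o (proj \o x) = Some (proj y).
Proof.
move=> Hx; rewrite /=; case: pickP => [y' /asboolP Hy' | H].
- have := ev_op Hx; rewrite /= in Hy' *; rewrite Hy' => -[Hv].
  congr Some; apply: val_inj; apply/ffunP => i.
  exact: (congr1 (fun g => g i) Hv).
- by have := H (proj y); rewrite (asboolT (ev_op Hx)).
Qed.

Let near_all t : forall s : seq 'I_n,
  nbhs t [set u | forall i, i \in s -> F i u = F i t].
Proof.
elim => [|i s IH].
  by apply: filterS filterT => u _ i.
have Hi : nbhs t [set u | F i u = F i t].
  have := (hF i).2 t [set F i t] (discrete_set1 _); exact.
apply: filterS (filterI Hi IH) => u [H1 H2] j; rewrite inE => /orP [/eqP ->|].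
  exact: H1.
exact: H2.
Qed.

Let G_chom {g : X -> U} : homset MX D g -> chom K D (fun t => g (proj t)).
Proof.
move=> [h1 h2 h3]; split; first split.
- move=> c; exact: h1.
- move=> r x Hx; apply: (h2 r (proj \o x)) => i /=.
  have -> : (fun k => ev (x k) i) = F i \o x by apply: funext => k; rewrite ffunE.
  have [[_ h _] _] := hF i; exact: h.
- move=> o x y Hx; exact: (h3 _ _ _ (proj_op Hx)).
- move=> t B HB.
  have Bt := nbhs_singleton HB.
  apply: filterS (near_all t (enum 'I_n)) => u Hu /=.
  suff -> : proj u = proj t by [].
  apply: val_inj; apply/ffunP => i; rewrite /= !ffunE; apply: Hu.
  by rewrite mem_enum.
Qed.

Lemma finite_witness : exists t, forall i, phi (F i) = F i t.
Proof.
have sep : separated D MX.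
  exists 'I_n, (fun x : X => (val x : 'I_n -> U)); split; first split.
  - move=> c; apply: funext => i /=; rewrite ffunE.
    have [[h _ _] _] := hF i; exact: h.
  - by move=> r x Hx.
  - move=> o x y /=; case: pickP => // y' /asboolP Hy' [<-]; exact: Hy'.
  - move=> a b Hab; apply: val_inj; apply/ffunP => i.
    exact: (congr1 (fun g => g i) Hab).
  - by move=> r x.
have [_ H2] := sd X MX sep.
pose psi := fun g : X -> U => phi (fun t => g (proj t)).
have [h1 h2 h3] := hphi.
have hpsi : is_hom_from_sub (power E X) (homset MX D) E psi.
  split.
  - move=> c Hc; have := h1 c (G_chom Hc); exact.
  - move=> r x Hx Hr.
    exact: (h2 r (fun k t => x k (proj t)) (fun k => G_chom (Hx k))
              (fun t => Hr (proj t))).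
  - move=> o x y Hx Hy Ho.
    apply: (h3 o (fun k t => x k (proj t)) (fun t => y (proj t))
              (fun k => G_chom (Hx k)) (G_chom Hy)).
    apply/power_ovalP => t; move: Ho => /= /power_ovalP Ho; exact: Ho.
have [x0 Hx0] := H2 psi hpsi.
case: x0 Hx0 => v Hv Hx0; have /asboolP [t Ht] := Hv.
exists t => i.
have hpi : homset MX D (fun x : X => val x i).
  split.
  - move=> c /=; rewrite ffunE; have [[h _ _] _] := hF i; exact: h.
  - move=> r x Hx; exact: Hx i.
  - move=> o x y /=; case: pickP => // y' /asboolP Hy' [<-].
    by move: Hy' => /power_ovalP /(_ i).
have := Hx0 _ hpi; rewrite /psi /= -Ht ffunE => <-.
congr phi; apply: funext => s; by rewrite ffunE.
Qed.

End Witness.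

Lemma seq_witness (L R : language) (U : finType) (D : structure L U)
  (E : structure R U) (T : topologicalType) (K : structure L T) :
  semi_dual_pair D E -> forall phi : (T -> U) -> U,
  is_hom_from_sub (power E T) (chom K D) E phi ->
  forall fs : seq (T -> U), (forall f, List.In f fs -> chom K D f) ->
  exists t, forall f, List.In f fs -> phi f = f t.
Proof.
move=> sd phi hphi [|f0 fs] Hfs.
  have [t _] := @finite_witness L R U D E T K sd phi hphi 0 (@ord0_elim _)
    (fun i => ord0_elim _ i).
  by exists t.
have [t Ht] := @finite_witness L R U D E T K sd phi hphi (size (f0 :: fs))
   (fun i => nth f0 (f0 :: fs) i) (fun i => Hfs _ (@nth_In' _ f0 (f0 :: fs) i (ltn_ord i))).
exists t => f /(@In_nth' _ f0) [i Hi <-].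
exact: (Ht (Ordinal Hi)).
Qed.

Theorem mainTheorem1 (L R : language) (U : finType)
    (D : structure L U) (E : structure R U)
    (T : topologicalType) (K : structure L T) :
  semi_dual_pair D E ->
  topological_structure K ->
  compact [set: T] ->
  cont_embeddable K D ->
  (* (a) every homomorphism K^* -> E is continuous *)
  (forall phi : (T -> U) -> U,
      is_hom_from_sub (power E T) (chom K D) E phi ->
      {within (chom K D : set {ptws T -> discr U}),
        continuous (phi : {ptws T -> discr U} -> discr U)}) /\
  (* (b) K is reflexive: the evaluation map onto K^** *)
  (forall phi : (T -> U) -> U,
      is_hom_from_sub (power E T) (chom K D) E phi ->
      {within (chom K D : set {ptws T -> discr U}),
        continuous (phi : {ptws T -> discr U} -> discr U)} ->
      exists x : T, forall f, chom K D f -> phi f = f x).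
Proof.
move=> sd _ cpt _.
have key : forall phi : (T -> U) -> U,
    is_hom_from_sub (power E T) (chom K D) E phi ->
    exists x : T, forall f, chom K D f -> phi f = f x.
  move=> phi hphi.
  pose G0 : set_system T := fun B => exists fs : seq (T -> U),
    (forall f, List.In f fs -> chom K D f) /\
    [set t | forall f, List.In f fs -> phi f = f t] `<=` B.
  have GF : ProperFilter G0.
    constructor.
    - move=> [fs [Hfs Hsub]].
      have [t Ht] := @seq_witness L R U D E T K sd phi hphi fs Hfs.
      exact: (Hsub t Ht).
    - constructor.
      + by exists [::]; split.
      + move=> A B [fa [Ha Sa]] [fb [Hb Sb]]; exists (fa ++ fb); split.
        * by move=> f Hf; case: (List.in_app_or _ _ _ Hf); [apply: Ha|apply: Hb].
        * move=> t Ht; split.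
            by apply: Sa => f Hf; apply: Ht; apply: List.in_or_app; left.
          by apply: Sb => f Hf; apply: Ht; apply: List.in_or_app; right.
      + move=> P Q PQ [fs [Hfs S]]; exists fs; split => //.
        by move=> t /S /PQ.
  have [x [_ Hx]] := cpt G0 GF (filterT).
  exists x => f Hf.
  apply: contrapT => Hne.
  have A1 : G0 [set t | phi f = f t].
    exists [:: f]; split; first by move=> g [<-|].
    by move=> t Ht; apply: Ht; left.
  have B1 : nbhs x [set t | f t = f x].
    have := Hf.2 x [set f x] (discrete_set1 _); exact.
  have [t [H1 H2]] := Hx _ _ A1 B1.
  by apply: Hne; rewrite H1 H2.
split; last by move=> phi hphi _; exact: key.
move=> phi hphi.
have [x Hx] := key phi hphi.
apply: (@subspace_eq_continuous _ _ _ (fun f : {ptws T -> discr U} => f x)).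
  by move=> f; rewrite inE => /Hx <-.
apply: continuous_subspaceT.
exact: proj_continuous.
Qed.
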